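(* For every integer $n\geq 5$, there is a graph homomorphism $h: M(G_{n-1}) \to G_n$. In particular, $\chi(G_n)\geq n-2$.
   Context: Let $[n]=\{1,\dots,n\}$. A $2$-subset $\{a,b\}$ of $[n]$ with $a<b$ is called stable if $b \neq a+1$ and $\{a,b\}\neq\{1,n\}$; it is written $ab$. For $n\ge 4$, the graph $G_n$ has as vertex set all stable $2$-subsets of $[n]$; two vertices $ab$ ($a<b$) and $cd$ ($c<d$) with $a<c$ are adjacent iff $\{a,b\}\cap\{c,d\}=\emptyset$ and either $a<c<b<d$, or $1<a<c<d<b$. For a graph $G=(V,E)$, the Mycielskian $M(G)$ has vertex set $V\cup\{\bar u : u\in V\}\cup\{*\}$ (with $\bar u$ new vertices called clones and $*$ a new vertex), and edges $\{u,v\}$ and $\{u,\bar v\}$ for every $\{u,v\}\in E$, and $\{\bar u,*\}$ for every $u\in V$. A homomorphism is a map on vertices sending edges to edges. $\chi$ denotes chromatic number. *)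

(* Defs.v *)
From mathcomp Require Import all_boot.
Set Implicit Arguments. Unset Strict Implicit. Unset Printing Implicit Defensive.

(* Stable 2-subsets {a,b} of [n] = {1..n}, a < b, encoded as pairs (a,b) of
   'I_n.+1 (so values 0..n; the condition 1 <= a excludes 0). *)
Definition stable (n : nat) (p : 'I_n.+1 * 'I_n.+1) : bool :=
  let a := val p.1 in let b := val p.2 in
  [&& 1 <= a, a < b, b <= n, b != a.+1 & ~~ ((a == 1) && (b == n))].

Definition Vtx (n : nat) := {p : 'I_n.+1 * 'I_n.+1 | @stable n p}.

Definition crossing (a b c d : nat) : bool :=
  [&& a < c, [&& a != c, a != d, b != c & b != d] &
     ((c < b) && (b < d)) || [&& 1 < a, c < d & d < b]].

Arguments stable : clear implicits.
Definition adjG (n : nat) : rel (Vtx n) := fun u v =>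
  let a := val (val u).1 in let b := val (val u).2 in
  let c := val (val v).1 in let d := val (val v).2 in
  crossing a b c d || crossing c d a b.

(* Mycielskian: vertices  inl (inl u) = u,  inl (inr u) = clone of u,  inr tt = * *)
Definition myc_vtx (V : Type) := ((V + V) + unit)%type.

Definition mycE (V : finType) (e : rel V) : rel (myc_vtx V) := fun x y =>
  match x, y with
  | inl (inl u), inl (inl v) => e u v
  | inl (inl u), inl (inr v) => e u v
  | inl (inr u), inl (inl v) => e u v
  | inl (inr _), inr _ => true
  | inr _, inl (inr _) => true
  | _, _ => false
  end.

Definition hom (V W : Type) (e : rel V) (f : rel W) (h : V -> W) : Prop :=
  forall x y, e x y -> f (h x) (h y).

Definition colorable (V : finType) (e : rel V) (k : nat) : bool :=
  [exists c : {ffun V -> 'I_k}, [forall x, forall y, e x y ==> (c x != c y)]].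

Lemma colorable_ex (V : finType) (e : rel V) :
  irreflexive e -> exists k, colorable e k.
Proof.
move=> irr; exists #|V|; apply/existsP; exists [ffun x => enum_rank x].
apply/forallP => x; apply/forallP => y; apply/implyP => exy; rewrite !ffunE.
apply/negP => /eqP /enum_rank_inj exy'; by rewrite exy' irr in exy.
Qed.

Definition chi (V : finType) (e : rel V) (irr : irreflexive e) : nat :=
  ex_minn (colorable_ex irr).

Lemma adjG_irr (n : nat) : irreflexive (@adjG n).
Proof. by move=> u; rewrite /adjG /crossing ltnn. Qed.
Arguments adjG : clear implicits. Arguments adjG_irr : clear implicits.

(* Main.v *)
Require Import Defs.
From mathcomp Require Import all_boot.
From mathcomp Require Import zify.
Set Implicit Arguments. Unset Strict Implicit. Unset Printing Implicit Defensive.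

Definition st m a b := [&& 1 <= a, a < b, b <= m, b != a.+1 & ~~ ((a == 1) && (b == m))].
Definition adjN a b c d := crossing a b c d || crossing c d a b.

Lemma L2 m a b c d : st m a b -> st m c d -> adjN a b c d ->
  adjN a b (if c == 1 then d else c) m.+1.
Proof. rewrite /st /adjN /crossing /=. have [->|hc] := eqVneq c 1; lia. Qed.

Lemma L2' m a b c d : st m a b -> st m c d -> adjN c d a b ->
  adjN (if c == 1 then d else c) m.+1 a b.
Proof. move=> h1 h2 h3; rewrite /adjN orbC; apply: L2 => //; by rewrite /adjN orbC. Qed.

Lemma L3 m c d : 4 <= m -> st m c d ->
  adjN (if c == 1 then d else c) m.+1 1 m.
Proof. rewrite /st /adjN /crossing /=. have [->|hc] := eqVneq c 1; lia. Qed.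

Lemma L3' m c d : 4 <= m -> st m c d ->
  adjN 1 m (if c == 1 then d else c) m.+1.
Proof. move=> h1 h2; rewrite /adjN orbC; exact: L3. Qed.

Definition mkV n (v0 : Vtx n) (a b : nat) : Vtx n :=
  insubd v0 ((inord a, inord b) : 'I_n.+1 * 'I_n.+1).

Lemma mkV_val n (v0 : Vtx n) a b : st n a b ->
  val (val (mkV v0 a b)).1 = a /\ val (val (mkV v0 a b)).2 = b.
Proof.
move=> hs.
have ha : a <= n by move: hs; rewrite /st; lia.
have hb : b <= n by move: hs; rewrite /st; lia.
have hst : stable n (inord a, inord b).
  by rewrite /stable /= !inordK.
by rewrite /mkV val_insubd hst /= !inordK.
Qed.

Lemma st_vtx m (u : Vtx m) : st m (val (val u).1) (val (val u).2).
Proof. exact: (valP u). Qed.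

Lemma adj_mkV n (v0 : Vtx n) a b c d : st n a b -> st n c d -> adjN a b c d ->
  adjG n (mkV v0 a b) (mkV v0 c d).
Proof.
move=> h1 h2 h3; rewrite /adjG.
have [-> ->] := mkV_val v0 h1; have [-> ->] := mkV_val v0 h2; exact: h3.
Qed.

Lemma st_lift m a b : st m a b -> st m.+1 a b.
Proof. rewrite /st; lia. Qed.

Lemma st_clone m a b : st m a b -> st m.+1 (if a == 1 then b else a) m.+1.
Proof. rewrite /st; have [->|hc] := eqVneq a 1; lia. Qed.

Lemma st_star m : 4 <= m -> st m.+1 1 m.
Proof. rewrite /st; lia. Qed.

Lemma hom_part m : 4 <= m ->
  exists h : myc_vtx (Vtx m) -> Vtx m.+1, hom (mycE (adjG m)) (adjG m.+1) h.
Proof.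
move=> hm.
have s13 : st m.+1 1 3 by rewrite /st; lia.
have hst : stable m.+1 ((inord 1, inord 3) : 'I_m.+2 * 'I_m.+2).
  by rewrite /stable /= !inordK //; lia.
pose v0 : Vtx m.+1 := @exist _ (stable _) _ hst.
pose A (u : Vtx m) := val (val u).1.
pose B (u : Vtx m) := val (val u).2.
exists (fun x => match x with
  | inl (inl u) => mkV v0 (A u) (B u)
  | inl (inr u) => mkV v0 (if A u == 1 then B u else A u) m.+1
  | inr _ => mkV v0 1 m end).
have sl u : st m.+1 (A u) (B u) by apply: st_lift; apply: st_vtx.
have sc u : st m.+1 (if A u == 1 then B u else A u) m.+1 by apply: st_clone; apply: st_vtx.
have ss : st m.+1 1 m by apply: st_star.
move=> [[u|u]|[]] [[v|v]|[]] //= H; apply: adj_mkV => //.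
- by apply: L2 => //; apply: st_vtx.
- by apply: L2' => //; apply: st_vtx.
- by apply: L3 => //; apply: st_vtx.
- by apply: L3' => //; apply: st_vtx.
Qed.

Lemma myc_color (V W : finType) (e : rel V) (f : rel W) (h : myc_vtx V -> W) k :
  hom (mycE e) f h -> colorable f k.+1 -> colorable e k.
Proof.
case: k => [|k].
  move=> hh /existsP [c /forallP hc].
  have F (u : V) : False.
    have := implyP (forallP (hc (h (inl (inr u)))) (h (inr tt))) (hh (inl (inr u)) (inr tt) isT).
    by case: (c _) => [[|//] ?]; case: (c _) => [[|//] ?].
  by apply/existsP; exists [ffun u => match F u with end]; apply/forallP => u; case: (F u).
move=> hh /existsP [c /forallP hc].
have P x y : f x y -> c x != c y by move=> fxy; exact: (implyP (forallP (hc x) y) fxy).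
pose al := c (h (inr tt)).
pose c1 (u : V) : 'I_k.+2 := if c (h (inl (inl u))) == al then c (h (inl (inr u)))
                             else c (h (inl (inl u))).
have c1n u : c1 u != al.
  rewrite /c1; case: ifP => [_|/negbT //].
  by apply: P; apply: hh.
have c1p u v : e u v -> c1 u != c1 v.
  move=> euv; rewrite /c1.
  have E1 : c (h (inl (inl u))) != c (h (inl (inl v))) by apply: P; apply: hh; exact: euv.
  case: ifP => [/eqP Hu|_]; case: ifP => [/eqP Hv|_].
  - by move: E1; rewrite Hu Hv eqxx.
  - by apply: P; apply: hh; exact: euv.
  - by apply: P; apply: hh; exact: euv.
  - exact: E1.
pose cp (i : 'I_k.+2) : 'I_k.+1 := inord (if i < al then val i else (val i).-1).
apply/existsP; exists [ffun u => cp (c1 u)].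
apply/forallP => u; apply/forallP => v; apply/implyP => euv; rewrite !ffunE.
have := c1p u v euv; have := c1n u; have := c1n v.
have lu := ltn_ord (c1 u); have lv := ltn_ord (c1 v); have la := ltn_ord al.
rewrite /cp -!val_eqE /=.
move: (val (c1 u)) (val (c1 v)) (val al) lu lv la => x y z lx ly lz.
move=> hy hx hxy.
have ix : (if x < z then x else x.-1) < k.+2 by case: ifP; lia.
have iy : (if y < z then y else y.-1) < k.+2 by case: ifP; lia.
have ix' : (if x < z then x else x.-1) < k.+1 by case: ifP; lia.
have iy' : (if y < z then y else y.-1) < k.+1 by case: ifP; lia.
rewrite !inordK //.
by case: ifP; case: ifP; lia.
Qed.

Lemma vtx_ex m : 4 <= m -> Vtx m.
Proof.
move=> hm.
have hst : stable m ((inord 1, inord 3) : 'I_m.+1 * 'I_m.+1).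
  by rewrite /stable /= !inordK //; lia.
exact: (@exist _ (stable _) _ hst).
Qed.

Lemma col_bound n : 4 <= n -> forall k, colorable (adjG n) k -> n - 2 <= k.
Proof.
elim: n => [//|n IH] hn k.
case: (ltnP n 4) => hn4.
- have -> : n.+1 = 4 by lia.
  move=> /existsP [c /forallP hc].
  case: k c hc => [|[|k]] c hc; last by [].
  + by case: (c (vtx_ex (isT : 4 <= 4))).
  + have s13 : stable 4 ((inord 1, inord 3) : 'I_5 * 'I_5) by rewrite /stable /= !inordK.
    have s24 : stable 4 ((inord 2, inord 4) : 'I_5 * 'I_5) by rewrite /stable /= !inordK.
    pose u : Vtx 4 := @exist _ (stable _) _ s13.
    pose v : Vtx 4 := @exist _ (stable _) _ s24.
    have := implyP (forallP (hc u) v).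
    have -> : adjG 4 u v by rewrite /adjG /= !inordK.
    move=> /(_ isT).
    by case: (c u) => [[|//] ?]; case: (c v) => [[|//] ?].
- case: k => [|k].
  + move=> /existsP [c _]; by case: (c (vtx_ex hn)).
  + move=> hc.
    have [h hh] := hom_part hn4.
    have := IH hn4 k (myc_color hh hc).
    lia.
Qed.

Theorem lemma3 (n : nat) (hn : 5 <= n) :
  (exists h : myc_vtx (Vtx n.-1) -> Vtx n,
      hom (mycE (adjG n.-1)) (adjG n) h)
  /\ n - 2 <= chi (adjG_irr n).
Proof.
case: n hn => [//|m] hm /=.
split; first by apply: hom_part; lia.
rewrite /chi; case: ex_minnP => k hk _.
apply: col_bound => //; lia.
Qed.
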